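(* Let $\mathcal{B}=\langle V,F,E\rangle$ be any finite bipartite graph and $W\subseteq V$. Then Algorithm 3 (causal ordering via coarse decomposition) applied to $(W,\mathcal{B})$ is well-defined and its output directed cluster graph is unique, i.e. it does not depend on the choice of the maximum matching nor on the choices made in computing the causal ordering graph of the complete part.
   Context: A bipartite graph $\mathcal{B}=\langle V,F,E\rangle$ has disjoint vertex sets $V,F$ and undirected edges $(v-f)$, $v\in V$, $f\in F$; $\mathrm{adj}_{\mathcal{B}}(X)$ is the set of vertices adjacent to some vertex of $X$. $F'\subseteq F$ is self-contained if $|F'|=|\mathrm{adj}_{\mathcal{B}}(F')|$ and $|F''|\le|\mathrm{adj}_{\mathcal{B}}(F'')|$ for all $F''\subseteq F'$; $\mathcal{B}$ is self-contained if $|F|=|V|$ and $F$ is self-contained; a non-empty self-contained set is minimal self-contained if no non-empty strict subset is self-contained. A matching is a set of edges without common endpoints; a maximum matching is one of maximal cardinality. For a matching $M$, an alternating path is a sequence of distinct vertices (possibly a single vertex) in which consecutive vertices are adjacent and the edges used alternate between edges not in $M$ and edges in $M$. A directed cluster graph is a pair $\langle\mathcal{V},\mathcal{E}\rangle$ with $\mathcal{V}$ a partition of a vertex set and $\mathcal{E}$ a set of edges $x\to C$ from vertices to clusters; $\mathrm{cl}_{\mathcal{V}}(x)$ is the cluster containing $x$. Algorithm 1 (input $W$ and $\mathcal{B}$ with the subgraph induced by $(V\setminus W)\cup F$ self-contained): initialize $\mathcal{E}=\emptyset$, $\mathcal{V}=\{\{w\}:w\in W\}$, $\mathcal{B}'=\langle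 V',F',E'\rangle$ the subgraph induced by $(V\setminus W)\cup F$; while $\mathcal{B}'$ is non-null: choose a minimal self-contained $S_F\subseteq F'$ in $\mathcal{B}'$, let $C=S_F\cup\mathrm{adj}_{\mathcal{B}'}(S_F)$, add $C$ to $\mathcal{V}$, add $v\to C$ for every $v\in\mathrm{adj}_{\mathcal{B}}(S_F)\setminus\mathrm{adj}_{\mathcal{B}'}(S_F)$, and replace $\mathcal{B}'$ by its subgraph induced by $(V'\cup F')\setminus C$. Output $\langle\mathcal{V},\mathcal{E}\rangle$. Coarse decomposition of a bipartite graph $\mathcal{B}'$ w.r.t. a maximum matching $M$: let $V_{\mathrm{un}},F_{\mathrm{un}}$ be the vertices of the variable side and of the constraint side left unmatched by $M$; $T_I$ is the set of vertices joined by an alternating path to some vertex of $V_{\mathrm{un}}$, $T_O$ the set of vertices joined by an alternating path to some vertex of $F_{\mathrm{un}}$, and $T_C$ the remaining vertices. Algorithm 3 (input $W\subseteq V$, $\mathcal{B}$): let $\mathcal{B}'$ be the subgraph of $\mathcal{B}$ induced by $(V\setminus W)\cup F$; choose a maximum matching $M$ of $\mathcal{B}'$; let $\langle T_I,T_C,T_O\rangle$ be the coarse decomposition of $\mathcal{B}'$ w.r.t. $M$ and $\mathcal{B}_I,\mathcal{B}_C,\mathcal{B}_O$ the subgraphs of $\mathcal{B}'$ induced by $T_I,T_C,T_O$. Let $\langle\mathcal{V}_C,\mathcal{E}_C\rangle$ be the output of Algorithm 1 on $\mathcal{B}_C$ with no exogenous vertices; $\mathcal{V}_I$, $\mathcal{V}_O$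 the partitions of $T_I$, $T_O$ into vertex sets of connected components of $\mathcal{B}_I$, $\mathcal{B}_O$. Set $\mathcal{V}=\mathcal{V}_I\cup\mathcal{V}_C\cup\mathcal{V}_O\cup\{\{w\}:w\in W\}$ and $\mathcal{E}=\mathcal{E}_C$; for each $(v-f)\in E$: if $v\in(T_O\cup T_C)\cap V$ and $f\in T_I\cap F$, add $v\to\mathrm{cl}_{\mathcal{V}}(f)$; else if $v\in T_O\cap V$ and $f\in T_C\cap F$, add $v\to\mathrm{cl}_{\mathcal{V}}(f)$. For each $w\in W$ add $w\to\mathrm{cl}_{\mathcal{V}}(f)$ for all $f\in\mathrm{adj}_{\mathcal{B}}(w)$. Output $\langle\mathcal{V},\mathcal{E}\rangle$. *)

(* Defs.v *)
(* Vertices of B are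
   elements of the sum type V + F (inl = variable side, inr = constraint side).
   Induced subgraphs are represented by their vertex set S : {set (V + F)}. *)
From Stdlib Require Import ClassicalDescription.
From mathcomp Require Import all_boot.
Set Implicit Arguments. Unset Strict Implicit. Unset Printing Implicit Defensive.

Section Bip.
Variables (V F : finType) (E : V -> F -> bool).

Definition vtx := (V + F)%type.

Definition adjv (x y : vtx) : bool :=
  match x, y with
  | inl v, inr f => E v f
  | inr f, inl v => E v f
  | _, _ => false
  end.

Definition isF (x : vtx) : bool := if x is inr _ then true else false.
Definition isV (x : vtx) : bool := if x is inl _ then true else false.

Definition adjS (S X : {set vtx}) : {set vtx} :=
  [set y in S | [exists x in X, adjv x y]].

Definition self_contained (S X : {set vtx}) : Prop :=
  [/\ X \subset [set x in S | isF x],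
      #|X| = #|adjS S X|
    & forall Y : {set vtx}, Y \subset X -> #|Y| <= #|adjS S Y|].

Definition min_self_contained (S X : {set vtx}) : Prop :=
  [/\ X != set0, self_contained S X
    & forall Y : {set vtx}, Y \proper X -> Y != set0 -> ~ self_contained S Y].

Definition graph_self_contained (S : {set vtx}) : Prop :=
  #|[set x in S | isF x]| = #|[set x in S | isV x]| /\
  self_contained S [set x in S | isF x].

(* Directed cluster graphs: a partition (set of clusters) and a set of
   edges x -> C. *)
Definition dcg := ({set {set vtx}} * {set (vtx * {set vtx})})%type.

(* Algorithm 1.  G : vertex set of the input graph B; the state is the vertex
   set S of the current B', the clusters and the edges built so far.
   alg1_run G S Vc Ec out : "starting from state (S,Vc,Ec), some sequence of
   choices of minimal self-contained sets leads to the output out". *)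
Inductive alg1_run (G : {set vtx}) :
  {set vtx} -> {set {set vtx}} -> {set (vtx * {set vtx})} -> dcg -> Prop :=
| alg1_done Vc Ec : alg1_run G set0 Vc Ec (Vc, Ec)
| alg1_step S Vc Ec SF out :
    S != set0 ->
    min_self_contained S SF ->
    let C := SF :|: adjS S SF in
    alg1_run G (S :\: C) (C |: Vc)
       (Ec :|: [set (x, C) | x in adjS G SF :\: adjS S SF]) out ->
    alg1_run G S Vc Ec out.

Definition alg1_out (G : {set vtx}) (W : {set V}) (out : dcg) : Prop :=
  alg1_run G (G :\: [set inl w | w in W])
    [set [set (inl w : vtx)] | w in W] set0 out.

Variable W : {set V}.

Definition Bp : {set vtx} :=
  [set x : vtx | match x with inl v => v \notin W | inr _ => true end].

Definition adjBp (x y : vtx) : bool := [&& x \in Bp, y \in Bp & adjv x y].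

Definition matching (M : {set (V * F)}) : Prop :=
  (forall p, p \in M -> E p.1 p.2 && (p.1 \notin W)) /\
  (forall p q, p \in M -> q \in M -> (p.1 = q.1 \/ p.2 = q.2) -> p = q).

Definition max_matching (M : {set (V * F)}) : Prop :=
  matching M /\ forall M', matching M' -> #|M'| <= #|M|.

Definition inM (M : {set (V * F)}) (x y : vtx) : bool :=
  match x, y with
  | inl v, inr f => (v, f) \in M
  | inr f, inl v => (v, f) \in M
  | _, _ => false
  end.

Definition alt_path (M : {set (V * F)}) (p : seq vtx) : Prop :=
  [/\ p != [::], uniq p,
      all (fun x => x \in Bp) p,
      (forall i x0, i.+1 < size p -> adjBp (nth x0 p i) (nth x0 p i.+1))
    & (forall i x0, i.+2 < size p ->
         inM M (nth x0 p i) (nth x0 p i.+1) != inM M (nth x0 p i.+1) (nth x0 p i.+2))].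

Definition alt_reach (M : {set (V * F)}) (U : {set vtx}) (x : vtx) : Prop :=
  exists u p, [/\ u \in U, alt_path M (u :: p) & last u p = x].

Definition Vun (M : {set (V * F)}) : {set vtx} :=
  [set inl v | v in [set v : V | (v \notin W) && [forall f, (v, f) \notin M]]].
Definition Fun (M : {set (V * F)}) : {set vtx} :=
  [set inr f | f in [set f : F | [forall v, (v, f) \notin M]]].

Definition decP (P : Prop) : bool := if excluded_middle_informative P then true else false.
Definition TI M : {set vtx} := [set x in Bp | decP (alt_reach M (Vun M) x)].
Definition TO M : {set vtx} := [set x in Bp | decP (alt_reach M (Fun M) x)].
Definition TC M : {set vtx} := Bp :\: (TI M :|: TO M).

Definition induced_rel (T : {set vtx}) : rel vtx :=
  fun x y => [&& x \in T, y \in T & adjv x y].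
Definition components (T : {set vtx}) : {set {set vtx}} :=
  [set [set y in T | connect (induced_rel T) x y] | x in T].

(* Algorithm 3 output, given the matching M and the output outC of
   Algorithm 1 on B_C with no exogenous vertices *)
Definition alg3_build (M : {set (V * F)}) (outC : dcg) : dcg :=
  let Vcl := components (TI M) :|: outC.1 :|: components (TO M)
             :|: [set [set (inl w : vtx)] | w in W] in
  let cl := pblock Vcl in
  let cond v f :=
    E v f &&
    ((((inl v : vtx) \in TO M :|: TC M) && ((inr f : vtx) \in TI M)) ||
     (((inl v : vtx) \in TO M) && ((inr f : vtx) \in TC M))) in
  (Vcl,
   outC.2
   :|: [set ((inl vf.1 : vtx), cl (inr vf.2)) | vf in [set vf : V * F | cond vf.1 vf.2]]
   :|: [set ((inl vf.1 : vtx), cl (inr vf.2)) | vf in [set vf : V * F | (vf.1 \in W) && E vf.1 vf.2]]).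

Definition alg3_out (out : dcg) : Prop :=
  exists M outC, [/\ max_matching M, alg1_out (TC M) set0 outC & out = alg3_build M outC].

End Bip.

(* Main.v *)
Require Import Defs.
From mathcomp Require Import all_boot.
From Stdlib Require Import Classical ClassicalDescription.
From mathcomp Require Import zify.
Set Implicit Arguments. Unset Strict Implicit. Unset Printing Implicit Defensive.

Section Alg1.
Variables (V F : finType) (E : V -> F -> bool).
Local Notation vtx := (vtx V F).
Local Notation adjS := (adjS E).
Implicit Types S Y A B C SF X Z : {set vtx}.

Definition FS (S : {set vtx}) := [set x in S | isF x].
Definition VS (S : {set vtx}) := [set x in S | isV x].
Definition gsc' (S : {set vtx}) :=
  #|FS S| = #|VS S| /\ forall Y : {set vtx}, Y \subset FS S -> #|Y| <= #|adjS S Y|.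

Lemma isFV (x : vtx) : isF x = ~~ isV x.
Proof. by case: x. Qed.

Lemma adjv_sym (x y : vtx) : adjv E x y = adjv E y x.
Proof. by case: x; case: y. Qed.

Lemma adjv_side (x y : vtx) : adjv E x y -> isV y = ~~ isV x.
Proof. by case: x => a; case: y. Qed.

Lemma adjS_sub S Y : adjS S Y \subset S.
Proof. by apply/subsetP => x; rewrite inE => /andP[]. Qed.

Lemma adjSF S Y : (forall y, y \in Y -> isF y) -> adjS S Y \subset VS S.
Proof.
move=> HY; apply/subsetP => x; rewrite !inE => /andP[-> /existsP[y /andP[yY]]].
by move: (HY y yY); case: y {yY} => // f _; case: x.
Qed.

Lemma adjSU S A B : adjS S (A :|: B) = adjS S A :|: adjS S B.
Proof.
apply/setP => x; rewrite !inE; case: (x \in S) => //=.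
apply/existsP/orP => [[y]|[]/existsP[y]]; rewrite ?inE.
- by case/andP => /orP[] yA a; [left|right]; apply/existsP; exists y; rewrite yA.
- by case/andP => yA a; exists y; rewrite inE yA.
- by case/andP => yA a; exists y; rewrite inE yA orbT.
Qed.

Lemma adjS_mono S A B : A \subset B -> adjS S A \subset adjS S B.
Proof.
move=> AB; apply/subsetP => x; rewrite !inE => /andP[-> /existsP[y /andP[yA a]]].
by apply/existsP; exists y; rewrite (subsetP AB).
Qed.

Lemma adjS_D S C Y : adjS (S :\: C) Y = adjS S Y :\: C.
Proof. by apply/setP => x; rewrite !inE andbA [(x \notin C) && _]andbC. Qed.

Lemma adjS0 S : adjS S set0 = set0.
Proof. by apply/setP => x; rewrite !inE; case: (x \in S) => //=; apply/existsP => -[y]; rewrite inE. Qed.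

Lemma FS_F S y : y \in FS S -> isF y.
Proof. by rewrite inE => /andP[]. Qed.

Lemma gscE S : graph_self_contained E S <-> gsc' S.
Proof.
split => [[h1 [_ _ h3]]|[h1 h2]]; first by split.
split => //; split => //.
apply/eqP; rewrite eqn_leq (h2 (FS S)) //= h1.
apply: subset_leq_card; apply: adjSF => y; exact: FS_F.
Qed.

Lemma sc_tight S Y : gsc' S ->
  (self_contained E S Y <-> Y \subset FS S /\ #|Y| = #|adjS S Y|).
Proof.
move=> [h1 h2]; split => [[a b _]|[a b]]; first by split.
split => // Z ZY; apply: h2; exact: subset_trans ZY a.
Qed.

Lemma tight_inter S A B : gsc' S ->
  A \subset FS S -> #|A| = #|adjS S A| ->
  B \subset FS S -> #|B| = #|adjS S B| ->
  #|adjS S A :&: adjS S B| <= #|A :&: B|.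
Proof.
move=> [_ h] hA eA hB eB.
have hU : #|A :|: B| <= #|adjS S (A :|: B)| by apply: h; rewrite subUset hA.
rewrite adjSU in hU.
have := cardsUI A B; have := cardsUI (adjS S A) (adjS S B); lia.
Qed.

Lemma min_disj S A B : gsc' S -> min_self_contained E S A -> min_self_contained E S B ->
  A = B \/ (A :&: B = set0 /\ adjS S A :&: adjS S B = set0).
Proof.
move=> g [nA scA mA] [nB scB mB].
have [hA eA] := (sc_tight A g).1 scA; have [hB eB] := (sc_tight B g).1 scB.
have ti := tight_inter g hA eA hB eB.
have [AB0|AB0] := eqVneq (A :&: B) set0.
  right; split => //; apply/eqP; rewrite -cards_eq0; move: ti; rewrite AB0 cards0; lia.
left.
have scI : self_contained E S (A :&: B).
  apply/(sc_tight _ g); split; first by apply: subset_trans hA; apply: subsetIl.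
  apply/eqP; rewrite eqn_leq; apply/andP; split.
    by case: g => _ h; apply: h; apply: subset_trans hA; apply: subsetIl.
  apply: leq_trans ti; apply: subset_leq_card; rewrite subsetI.
  by rewrite !adjS_mono // ?subsetIl ?subsetIr.
have IA : A :&: B = A.
  apply/eqP; rewrite eqEproper subsetIl /=; apply/negP => pr.
  by apply: (mA _ pr AB0).
have AsB : A \subset B by rewrite -IA subsetIr.
apply/eqP; rewrite eqEproper AsB /=; apply/negP => pr.
by apply: (mB _ pr nA).
Qed.

Lemma remove_gsc S SF : gsc' S -> SF \subset FS S -> #|SF| = #|adjS S SF| ->
  gsc' (S :\: (SF :|: adjS S SF)).
Proof.
move=> [h1 h2] hF eF.
set N := adjS S SF.
have NV : N \subset VS S by apply: adjSF => y /(subsetP hF); exact: FS_F.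
have inFS : forall T x, (x \in FS T) = (x \in T) && isF x by move=> T x; rewrite inE.
have inVS : forall T x, (x \in VS T) = (x \in T) && isV x by move=> T x; rewrite inE.
have eFS : FS (S :\: (SF :|: N)) = FS S :\: SF.
  apply/setP => x; rewrite inFS !in_setD in_setU inFS.
  case xN: (x \in N); last by rewrite orbF; case: (x \in SF); rewrite //= andbC.
  by have := subsetP NV x xN; rewrite inVS => /andP[_]; case: x {xN} => //= ?; rewrite !andbF.
have eVS : VS (S :\: (SF :|: N)) = VS S :\: N.
  apply/setP => x; rewrite inVS !in_setD in_setU inVS; case xF: (x \in SF).
    by have := subsetP hF x xF; rewrite inFS => /andP[_]; case: x {xF} => //= ?; rewrite !andbF.
  by rewrite /=; case: (x \in N); rewrite //= andbC.
have eN : #|N| = #|SF| by [].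
split.
  by rewrite eFS eVS !cardsDS // h1 eF.
move=> Y; rewrite eFS => hY.
rewrite adjS_D.
have YSF : Y :&: SF = set0.
  by apply/setP => x; rewrite !inE; apply/negP => /andP[/(subsetP hY)]; rewrite !inE => /andP[/negPf ->].
have hYF : Y :|: SF \subset FS S.
  by rewrite subUset hF andbT; apply: subset_trans hY (subsetDl _ _).
have := h2 _ hYF; rewrite adjSU.
have e1 := cardsUI Y SF; rewrite YSF cards0 addn0 in e1.
have e2 := cardsID N (adjS S Y :|: N).
have e3 : (adjS S Y :|: N) :&: N = N by apply/setIidPr; apply: subsetUr.
rewrite e3 in e2.
have e4 : (adjS S Y :|: N) :\: N = adjS S Y :\: (SF :|: N).
  apply/setP => x; rewrite !in_setD !in_setU.
  case xF: (x \in SF); last by case: (x \in N); case: (x \in adjS S Y).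
  have := subsetP hF x xF; rewrite inFS => /andP[_ hx].
  have : x \notin adjS S Y.
    have hYs : forall y, y \in Y -> isF y.
      by move=> y /(subsetP hY); rewrite in_setD inFS => /andP[_ /andP[]].
    by apply/negP => /(subsetP (adjSF S hYs)); rewrite inVS => /andP[_]; case: x hx {xF}.
  have xN : x \notin N by apply/negP => /(subsetP NV); rewrite inVS => /andP[_]; case: x hx {xF}.
  by move/negPf => ->; rewrite (negPf xN).
rewrite e4 in e2.
rewrite -/N; lia.
Qed.

Lemma step' G S Vc Ec SF out : S != set0 -> min_self_contained E S SF ->
  alg1_run E G (S :\: (SF :|: adjS S SF)) ((SF :|: adjS S SF) |: Vc)
    (Ec :|: [set (x, SF :|: adjS S SF) | x in adjS G SF :\: adjS S SF]) out ->
  alg1_run E G S Vc Ec out.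
Proof. by move=> h1 h2 h3; apply: alg1_step h3. Qed.

Lemma run_inv G S Vc Ec out : alg1_run E G S Vc Ec out ->
  (S = set0 /\ out = (Vc, Ec)) \/ exists SF, [/\ S != set0, min_self_contained E S SF &
  alg1_run E G (S :\: (SF :|: adjS S SF)) ((SF :|: adjS S SF) |: Vc)
    (Ec :|: [set (x, SF :|: adjS S SF) | x in adjS G SF :\: adjS S SF]) out].
Proof. by case => [*|S' Vc' Ec' SF out' h1 h2 h3]; [left|right; exists SF]. Qed.

Lemma min_exists_aux S : forall n Y, #|Y| <= n -> Y != set0 -> self_contained E S Y ->
  exists Z, min_self_contained E S Z.
Proof.
elim => [|n IH] Y hY nY scY.
  by move: nY; rewrite -cards_eq0; move: hY; rewrite leqn0 => ->.
case: (classic (forall Z, Z \proper Y -> Z != set0 -> ~ self_contained E S Z)) => h.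
  by exists Y; split.
have [Z hZ] : exists Z, ~ (Z \proper Y -> Z != set0 -> ~ self_contained E S Z).
  by apply: not_all_ex_not.
have pZ : Z \proper Y by apply: NNPP => c; apply: hZ.
have nZ : Z != set0 by apply: NNPP => c; apply: hZ.
have sZ : self_contained E S Z by apply: NNPP => c; apply: hZ.
apply: (IH Z) => //; have := proper_card pZ; lia.
Qed.

Lemma nonempty_F S : gsc' S -> S != set0 -> FS S != set0.
Proof.
move=> [h1 _] nS; apply/negP => /eqP F0.
move: h1; rewrite F0 cards0 => /esym/eqP; rewrite cards_eq0 => /eqP V0.
case/set0Pn: nS => x xS.
case: x xS => [v|f] xS.
  have : (inl v : vtx) \in VS S by rewrite inE xS.
  by rewrite V0 inE.
have : (inr f : vtx) \in FS S by rewrite inE xS.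
by rewrite F0 inE.
Qed.

Lemma min_exists S : gsc' S -> S != set0 -> exists SF, min_self_contained E S SF.
Proof.
move=> g nS; apply: (@min_exists_aux S _ (FS S) (leqnn _) (nonempty_F g nS)).
by have := (gscE S).2 g => -[_].
Qed.

Lemma remove_lt S SF : SF \subset S -> SF != set0 -> #|S :\: (SF :|: adjS S SF)| < #|S|.
Proof.
move=> hS nSF; apply: proper_card; rewrite properEneq subsetDl andbT.
case/set0Pn: nSF => x xSF; apply/negP => /eqP/setP/(_ x).
by rewrite !inE xSF (subsetP hS _ xSF).
Qed.

Lemma msc_props S SF : gsc' S -> min_self_contained E S SF ->
  [/\ SF \subset FS S, #|SF| = #|adjS S SF|, SF \subset S & SF != set0].
Proof.
move=> g [n sc _]; have [h1 h2] := (sc_tight SF g).1 sc; split => //.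
by apply/subsetP => x /(subsetP h1); rewrite inE => /andP[].
Qed.

Lemma run_exists G : forall n S, #|S| <= n -> gsc' S ->
  forall Vc Ec, exists out, alg1_run E G S Vc Ec out.
Proof.
elim => [|n IH] S hS g Vc Ec.
  move: hS; rewrite leqn0 cards_eq0 => /eqP ->; exists (Vc, Ec); exact: alg1_done.
case: (eqVneq S set0) => [->|nS]; first by exists (Vc, Ec); exact: alg1_done.
have [SF m] := min_exists g nS.
have [h1 h2 h3 h4] := msc_props g m.
have g' := remove_gsc g h1 h2.
have lt := remove_lt h3 h4.
have [out hout] := IH _ (leq_trans (leq_trans lt hS) (leqnn _)) g'
  ((SF :|: adjS S SF) |: Vc)
  (Ec :|: [set (x, SF :|: adjS S SF) | x in adjS G SF :\: adjS S SF]).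
by exists out; apply: step' hout.
Qed.

Lemma diamond S SF1 SF2 : gsc' S -> min_self_contained E S SF1 -> min_self_contained E S SF2 ->
  SF1 :&: SF2 = set0 -> adjS S SF1 :&: adjS S SF2 = set0 ->
  adjS (S :\: (SF1 :|: adjS S SF1)) SF2 = adjS S SF2 /\
  min_self_contained E (S :\: (SF1 :|: adjS S SF1)) SF2.
Proof.
move=> g m1 m2 dF dN.
have [h1 h2 h3 h4] := msc_props g m1.
have [k1 k2 k3 k4] := msc_props g m2.
have g1 := remove_gsc g h1 h2.
have disj : forall Y, Y \subset SF2 -> adjS (S :\: (SF1 :|: adjS S SF1)) Y = adjS S Y.
  move=> Y YS; rewrite adjS_D; apply/setP => x; rewrite in_setD in_setU.
  case xa: (x \in adjS S Y); rewrite ?andbF //= andbT.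
  have hYs : forall y, y \in Y -> isF y.
    by move=> y /(subsetP YS) /(subsetP k1); rewrite inE => /andP[].
  have xV : isV x.
    by have := subsetP (adjSF S hYs) x xa; rewrite inE => /andP[].
  apply/negP => /orP[xF|xb].
    by have := subsetP h1 x xF; rewrite inE => /andP[_]; case: x {xF xa} xV.
  have : x \in adjS S SF1 :&: adjS S SF2.
    by rewrite inE xb (subsetP (adjS_mono S YS)).
  by rewrite dN inE.
have key := disj SF2 (subxx _); split => //.
split => //.
  apply/(sc_tight _ g1); rewrite key; split => //.
  apply/subsetP => x xF; rewrite [x \in FS _]inE in_setD in_setU.
  have := subsetP k1 x xF; rewrite inE => /andP[-> xFF]; rewrite xFF !andbT.
  apply/negP => /orP[xa|xa].
    have : x \in SF1 :&: SF2 by rewrite inE xa xF.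
    by rewrite dF inE.
  have hYs : forall y, y \in SF1 -> isF y.
    by move=> y /(subsetP h1); rewrite inE => /andP[].
  have := subsetP (adjSF S hYs) x xa.
  by rewrite inE => /andP[_]; case: x {xF xa} xFF.
move=> Y pY nY scY.
case: m2 => _ _ mm; apply: (mm Y pY nY).
have [a b] := (sc_tight Y g1).1 scY.
apply/(sc_tight _ g); split.
  by apply: subset_trans (proper_sub pY) k1.
by rewrite b disj // proper_sub.
Qed.

Lemma run_unique G : forall n S, #|S| <= n -> gsc' S ->
  forall Vc Ec o1 o2, alg1_run E G S Vc Ec o1 -> alg1_run E G S Vc Ec o2 -> o1 = o2.
Proof.
elim => [|n IH] S hS g Vc Ec o1 o2 r1 r2.
  move: hS; rewrite leqn0 cards_eq0 => /eqP S0.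
  case: (run_inv r1) => [[_ ->]|[SF [nS _ _]]]; last by rewrite S0 eqxx in nS.
  case: (run_inv r2) => [[_ ->]|[SF [nS _ _]]] //; by rewrite S0 eqxx in nS.
case: (run_inv r1) => [[S0 ->]|[SF1 [nS m1 q1]]].
  case: (run_inv r2) => [[_ ->]|[SF [nS _ _]]] //; by rewrite S0 eqxx in nS.
case: (run_inv r2) => [[S0 _]|[SF2 [_ m2 q2]]]; first by rewrite S0 eqxx in nS.
have [h1 h2 h3 h4] := msc_props g m1.
have [k1 k2 k3 k4] := msc_props g m2.
have g1 := remove_gsc g h1 h2.
have g2 := remove_gsc g k1 k2.
have lt1 : #|S :\: (SF1 :|: adjS S SF1)| <= n.
  by have := remove_lt h3 h4; lia.
have lt2 : #|S :\: (SF2 :|: adjS S SF2)| <= n.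
  by have := remove_lt k3 k4; lia.
case: (min_disj g m1 m2) => [e|[dF dN]].
  by subst SF2; apply: (IH _ lt1 g1 _ _ _ _ q1 q2).
have [key1 m21] := diamond g m1 m2 dF dN.
have dF' : SF2 :&: SF1 = set0 by rewrite setIC.
have dN' : adjS S SF2 :&: adjS S SF1 = set0 by rewrite setIC.
have [key2 m12] := diamond g m2 m1 dF' dN'.
set C1 := SF1 :|: adjS S SF1 in q1 key1 m21 lt1 g1 key2 m12.
set C2 := SF2 :|: adjS S SF2 in q2 key1 m21 lt2 g2 key2 m12.
set E1 := [set (x, C1) | x in adjS G SF1 :\: adjS S SF1] in q1.
set E2 := [set (x, C2) | x in adjS G SF2 :\: adjS S SF2] in q2.
have [j1 j2 j3 j4] := msc_props g1 m21.
have g12 := remove_gsc g1 j1 j2.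
rewrite key1 -/C2 in g12.
have [o ho] := run_exists G (leqnn _) g12 (C2 |: (C1 |: Vc)) ((Ec :|: E1) :|: E2).
have r1' : alg1_run E G (S :\: C1) (C1 |: Vc) (Ec :|: E1) o.
  apply: (step' _ m21); last by rewrite key1 -/C2.
  by case/set0Pn: j4 => x xS; apply/set0Pn; exists x; apply: (subsetP j3).
have r2' : alg1_run E G (S :\: C2) (C2 |: Vc) (Ec :|: E2) o.
  have [i1 i2 i3 i4] := msc_props g2 m12.
  apply: (step' _ m12); last first.
    rewrite key2 -/C1 -/E1.
    have -> : S :\: C2 :\: C1 = S :\: C1 :\: C2 by rewrite !setDDl setUC.
    have -> : C1 |: (C2 |: Vc) = C2 |: (C1 |: Vc) by rewrite setUCA.
    by rewrite setUAC.
  by case/set0Pn: i4 => x xS; apply/set0Pn; exists x; apply: (subsetP i3).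
have nS1 : #|S :\: C1| <= n by [].
by rewrite (IH _ lt1 g1 _ _ _ _ q1 r1') (IH _ lt2 g2 _ _ _ _ q2 r2').
Qed.
End Alg1.

Section Match.
Variables (V F : finType) (E : V -> F -> bool) (W : {set V}).
Local Notation vtx := (vtx V F).
Local Notation Bp := (Bp F W).
Local Notation adjBp := (adjBp E W).
Local Notation alt_path := (alt_path E W).
Local Notation alt_reach := (alt_reach E W).
Local Notation matching := (matching E W).
Implicit Types (M : {set (V * F)}) (x y z u : vtx) (p q : seq vtx) (X : {set vtx}).

Definition Ub b M : {set vtx} := [set x in Bp | (isV x == b) && [forall y, ~~ inM M x y]].

Lemma VunE M : Vun W M = Ub true M.
Proof.
apply/setP => x; apply/idP/idP.
  case/imsetP => v; rewrite inE => /andP[h1 /forallP h2] ->.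
  rewrite inE /= inE h1 /=; apply/forallP => -[w|f] //=; exact: h2.
rewrite inE => /andP[]; case: x => [v|f]; rewrite inE //= => h1 h2.
apply/imsetP; exists v => //; rewrite inE h1; apply/forallP => f; exact: (forallP h2 (inr f)).
Qed.

Lemma FunE M : Fun M = Ub false M.
Proof.
apply/setP => x; apply/idP/idP.
  case/imsetP => f; rewrite inE => /forallP h ->.
  rewrite inE /= inE /=; apply/forallP => -[w|g] //=; exact: h.
rewrite inE => /andP[]; case: x => [v|f]; rewrite inE //= => _ h2.
apply/imsetP; exists f => //; rewrite inE; apply/forallP => v; exact: (forallP h2 (inl v)).
Qed.

Lemma Ub_side b M x : x \in Ub b M -> isV x = b.
Proof. by rewrite inE => /and3P[_ /eqP]. Qed.

Lemma inM_sym M x y : inM M x y = inM M y x.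
Proof. by case: x; case: y. Qed.

Lemma adjBp_sym x y : adjBp x y = adjBp y x.
Proof. by rewrite /adjBp adjv_sym andbCA. Qed.

Lemma adjBp_side x y : adjBp x y -> isV y = ~~ isV x.
Proof. by case/and3P => _ _; apply: adjv_side. Qed.

Lemma adjBp_Bp x y : adjBp x y -> (x \in Bp) && (y \in Bp).
Proof. by case/and3P => -> ->. Qed.

Lemma inM_adj M x y : matching M -> inM M x y -> adjBp x y.
Proof.
case=> h1 _; case: x => [v|f]; case: y => [w|g] //= /h1 /andP[e nw];
  by rewrite /adjBp /= !inE e nw.
Qed.

Lemma inM_uniq M x y z : matching M -> inM M x y -> inM M x z -> y = z.
Proof.
case=> _ h2; case: x => [v|f]; case: y => [w|g] //; case: z => [w'|g'] //= a b.
  by have := h2 _ _ a b (or_introl erefl) => -[->].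
by have := h2 _ _ a b (or_intror erefl) => -[->].
Qed.

Definition mate M x : vtx := odflt x [pick y | inM M x y].

Lemma mateP M x y : matching M -> inM M x y -> mate M x = y.
Proof.
move=> m h; rewrite /mate; case: pickP => [z hz|/(_ y)]; last by rewrite h.
exact: inM_uniq m hz h.
Qed.

Lemma mate_inM M x : [exists y, inM M x y] -> inM M x (mate M x).
Proof. by case/existsP => y h; rewrite /mate; case: pickP => [z hz|/(_ y)] //=; rewrite h. Qed.

Lemma alt_path_take M p k : alt_path M p -> 0 < k -> alt_path M (take k p).
Proof.
case=> [np up ap adj alt] k0; split.
- by case: p np {up ap adj alt} => // x p _; case: k k0.
- exact: take_uniq.
- by apply/allP => x /mem_take; apply/allP: x.
- move=> i x0 hi; have [h1 h2] : i.+1 < k /\ i.+1 < size p.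
    by move: hi; rewrite size_take; case: ifP => /= ?; lia.
  rewrite !nth_take //; [apply: adj => // | lia].
- move=> i x0 hi; have [h1 h2] : i.+2 < k /\ i.+2 < size p.
    by move: hi; rewrite size_take; case: ifP => /= ?; lia.
  rewrite !nth_take //; [apply: alt => // | lia | lia].
Qed.

Lemma alt_path_tail M x p : alt_path M (x :: p) -> p != [::] -> alt_path M p.
Proof.
case=> [_ up ap adj alt] np; split => //.
- by case/andP: up.
- by case/andP: ap.
- by move=> i x0 hi; apply: (adj i.+1 x0).
- by move=> i x0 hi; apply: (alt i.+1 x0).
Qed.

Lemma alt_path_rcons M p y : alt_path M p -> y \notin p -> y \in Bp ->
  (forall x0, adjBp (last x0 p) y) ->
  (forall x0, 1 < size p -> inM M (nth x0 p (size p).-2) (last x0 p) != inM M (last x0 p) y) ->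
  alt_path M (rcons p y).
Proof.
case=> [np up ap adj alt] yp yB hadj halt.
have sp : 0 < size p by case: p np {up ap adj alt yp hadj halt}.
split.
- by case: (p) => //.
- by rewrite rcons_uniq yp.
- by rewrite all_rcons yB.
- move=> i x0; rewrite size_rcons !nth_rcons => hi.
  case: (ltnP i.+1 (size p)) => h1.
    by rewrite (ltnW h1); apply: adj.
  have ei : i.+1 = size p by lia.
  have hi' : i < size p by lia.
  rewrite hi' ei eqxx.
  by have := hadj x0; rewrite -nth_last -ei.
- move=> i x0; rewrite size_rcons !nth_rcons => hi.
  case: (ltnP i.+2 (size p)) => h1.
    by rewrite (ltnW h1) (ltnW (ltnW h1)); apply: alt.
  have ei : i.+2 = size p by lia.
  have hi1 : i < size p by lia.
  have hi2 : i.+1 < size p by lia.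
  rewrite hi1 hi2 ei eqxx.
  have := halt x0; rewrite -!nth_last -ei /=; apply; lia.
Qed.

Lemma alt_path_rev M p : alt_path M p -> alt_path M (rev p).
Proof.
case=> [np up ap adj alt]; split.
- by case: (p) np => // x s _; rewrite rev_cons; case: (rev s).
- by rewrite rev_uniq.
- by rewrite all_rev.
- move=> i x0; rewrite size_rev => hi.
  rewrite !nth_rev; try lia.
  rewrite adjBp_sym; have -> : size p - i.+1 = (size p - i.+2).+1 by lia.
  apply: adj; lia.
- move=> i x0; rewrite size_rev => hi.
  rewrite !nth_rev; try lia.
  rewrite eq_sym inM_sym [X in _ != X]inM_sym.
  have -> : size p - i.+1 = (size p - i.+3).+2 by lia.
  have -> : size p - i.+2 = (size p - i.+3).+1 by lia.
  apply: alt; lia.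
Qed.


Lemma reach_nth M (U : {set vtx}) u p i x0 : u \in U -> alt_path M (u :: p) -> i < size (u :: p) ->
  alt_reach M U (nth x0 (u :: p) i).
Proof.
move=> uU ap hi; exists u, (take i p); split => //.
  by have := alt_path_take ap (ltn0Sn i).
rewrite (last_nth x0) size_takel; last by move: hi => /=; lia.
by have := nth_take x0 (ltnSn i) (u :: p).
Qed.

Lemma alt_path_transfer M M' q : alt_path M q ->
  (forall a b, a \in q -> b \in q -> inM M' a b = inM M a b) -> alt_path M' q.
Proof.
case=> [nq uq aq adj alt] h; split => // i x0 hi.
rewrite !h; [exact: alt | apply: mem_nth; apply: leq_trans _ hi; lia ..].
Qed.

Lemma parity M b u p x0 : u \in Ub b M -> alt_path M (u :: p) ->
  (forall i, i < size p -> inM M (nth x0 (u :: p) i) (nth x0 (u :: p) i.+1) = odd i) /\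
  (forall i, i < size (u :: p) -> isV (nth x0 (u :: p) i) = b (+) odd i).
Proof.
rewrite inE => /and3P[uB /eqP ub /forallP un] [_ _ _ adj alt]; split.
  elim => [|i IH] hi; first by apply/negbTE; exact: un.
  have := alt i x0 hi; rewrite IH; last by lia.
  by rewrite /=; case: (odd i); case: (inM M _ _).
elim => [|i IH] hi; first by rewrite /= ub addbF.
have := adjBp_side (adj i x0 hi); rewrite IH; last by lia.
by move=> ->; rewrite /= addbN.
Qed.

Lemma augment : forall n M u p, size p <= n -> matching M -> u \in Ub true M ->
  alt_path M (u :: p) -> last u p \in Ub false M ->
  exists M', matching M' /\ #|M'| = #|M|.+1.
Proof.
elim => [|n IH] M u p hs m uU ap lU.
  move: hs; rewrite leqn0 size_eq0 => /eqP p0; subst p.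
  by have := Ub_side uU; rewrite /= (Ub_side lU).
case: p hs ap lU => [|y1 p'] hs ap lU.
  by have := Ub_side uU; rewrite /= (Ub_side lU).
have [_ uq aB adj alt] := ap.
have [uB uV un] : [/\ u \in Bp, isV u & forall y, ~~ inM M u y].
  by move: uU; rewrite inE => /and3P[-> /eqP -> /forallP].
have a0 := adj 0 u erefl; rewrite /= in a0.
have y1V : isV y1 = false by rewrite (adjBp_side a0) uV.
case: u uU uB uV un uq aB adj alt a0 ap lU => [v0|//] uU uB _ un uq aB adj alt a0 ap lU.
case: y1 hs y1V uq aB adj alt a0 lU ap => [//|f1] hs _ uq aB adj alt a0 lU ap.
have v0W : v0 \notin W by move: uB; rewrite inE.
have e01 : E v0 f1 by case/and3P: a0.
have unM : forall g, (v0, g) \notin M by move=> g; exact: (un (inr g)).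
case: p' hs uq aB adj alt lU ap => [|y2 p''] hs uq aB adj alt lU ap.
  have f1un : forall w, (w, f1) \notin M.
    by move=> w; move: lU; rewrite /= inE => /and3P[_ _ /forallP /(_ (inl w))].
  exists ((v0, f1) |: M); split; last by rewrite cardsU1 unM.
  case: m => m1 m2; split.
    move=> q; rewrite !inE => /orP[/eqP -> /=|]; [by rewrite e01 v0W | exact: m1].
  move=> q r; rewrite !inE => /orP[/eqP ->|qM] /orP[/eqP ->|rM] //= [] e.
  - by case: r rM e => a b /= rM e; subst a; rewrite (negbTE (unM b)) in rM.
  - by case: r rM e => a b /= rM e; subst b; rewrite (negbTE (f1un a)) in rM.
  - by case: q qM e => a b /= qM e; subst a; rewrite (negbTE (unM b)) in qM.
  - by case: q qM e => a b /= qM e; subst b; rewrite (negbTE (f1un a)) in qM.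
  - exact: m2 qM rM (or_introl e).
  - exact: m2 qM rM (or_intror e).
have a1 := alt 0 (inl v0) erefl; rewrite /= (negbTE (unM f1)) in a1.
case: y2 hs uq aB adj alt lU ap a1 => [v1|//] hs uq aB adj alt lU ap a1.
have m11 : (v1, f1) \in M by move: a1; case: ((v1, f1) \in M).
have v1v0 : v1 != v0.
  by apply/eqP => e; subst v1; case/andP: uq => /negP h _; apply: h; rewrite !inE eqxx orbT.
set M1 := (v0, f1) |: (M :\ (v1, f1)).
have [m1 m2] := m.
have mM1 : matching M1.
  split.
    move=> q; rewrite !inE => /orP[/eqP -> /=|/andP[_]]; [by rewrite e01 v0W | exact: m1].
  move=> q r; rewrite !inE => /orP[/eqP ->|/andP[nq qM]] /orP[/eqP ->|/andP[nr rM]] //= [] e.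
  - by case: r nr rM e => a b nr rM /= e; subst a; rewrite (negbTE (unM b)) in rM.
  - by case: r nr rM e => a b nr rM /= e; subst b; rewrite (m2 _ _ rM m11 (or_intror erefl)) eqxx in nr.
  - by case: q nq qM e => a b nq qM /= e; subst a; rewrite (negbTE (unM b)) in qM.
  - by case: q nq qM e => a b nq qM /= e; subst b; rewrite (m2 _ _ qM m11 (or_intror erefl)) eqxx in nq.
  - exact: m2 qM rM (or_introl e).
  - exact: m2 qM rM (or_intror e).
have cM1 : #|M1| = #|M|.
  rewrite cardsU1 (cardsD1 (v1, f1) M) m11 !inE negb_and unM orbT /=.
  by [].
have f1q : (inr f1 : vtx) \notin (inl v1 :: p'').
  by move: uq => /= /andP[_ /andP[]].
have gen : forall v g, (inr g : vtx) \in (inl v1 :: p'') -> ((v, g) \in M1) = ((v, g) \in M).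
    move=> v g hg; rewrite !inE xpair_eqE.
    have gf : (g == f1) = false by apply/negbTE; apply/eqP => e; subst g; rewrite hg in f1q.
    by rewrite gf andbF /= negb_and gf orbT.
have tr : forall a b, a \in (inl v1 :: p'') -> b \in (inl v1 :: p'') -> inM M1 a b = inM M a b.
  by move=> [a|g] [b|h] //= ha hb; apply: gen.
have ap2 : alt_path M (inl v1 :: p'').
  by apply: (alt_path_tail (alt_path_tail ap _)).
have ap2' := alt_path_transfer ap2 tr.
have v1U : (inl v1 : vtx) \in Ub true M1.
  rewrite inE; have := aB; rewrite /= => /and3P[_ _ /andP[-> _]] /=.
  apply/forallP => -[w|g] //=; rewrite !inE xpair_eqE (negbTE v1v0) /=.
  apply/negP => /andP[ng gM]; have := m2 _ _ gM m11 (or_introl erefl) => e.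
  by rewrite e eqxx in ng.
have lU' : last (inl v1) p'' \in Ub false M1.
  move: lU; rewrite /= !inE => /and3P[lB lV /forallP ln]; rewrite lB lV /=.
  have lm : last (inl v1) p'' \in (inl v1 :: p'') by apply: mem_last.
  move: lm ln lV; case: (last (inl v1) p'') => [//|g] lm ln _.
  apply/forallP => -[v|h] //=; rewrite gen //.
  exact: (ln (inl v)).
have hs' : size p'' <= n by move: hs; rewrite /= ltnS => /ltnW.
have [M' [mM' cM']] := IH M1 (inl v1) p'' hs' mM1 v1U ap2' lU'.
by exists M'; rewrite cM' cM1.
Qed.


Lemma decPP (P : Prop) : Defs.decP P = true <-> P.
Proof. rewrite /Defs.decP; case: (excluded_middle_informative P) => h; by split. Qed.

Definition R b M : {set vtx} := [set x in Bp | Defs.decP (alt_reach M (Ub b M) x)].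

Lemma TIE M : TI E W M = R true M.
Proof. by rewrite /TI VunE. Qed.
Lemma TOE M : TO E W M = R false M.
Proof. by rewrite /TO FunE. Qed.

Lemma reach_Bp M U x : alt_reach M U x -> x \in Bp.
Proof.
case=> u [p [_ [_ _ aB _ _] <-]].
by apply: (allP aB); apply: mem_last.
Qed.

Lemma inR b M x : (x \in R b M) <-> alt_reach M (Ub b M) x.
Proof.
rewrite inE; split => [/andP[_ /decPP] //|h].
by rewrite (reach_Bp h) /=; apply/decPP.
Qed.

Lemma alt_path1 M u : u \in Bp -> alt_path M [:: u].
Proof. by move=> uB; split => //=; rewrite uB. Qed.

Lemma Ub_R b M x : x \in Ub b M -> x \in R b M.
Proof.
move=> h; apply/inR; exists x, [::]; split => //; apply: alt_path1.
by move: h; rewrite inE => /andP[].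
Qed.

Lemma rev_reach M u p : alt_path M (u :: p) ->
  exists p', alt_path M (last u p :: p') /\ last (last u p) p' = u.
Proof.
case/lastP: p => [|q y] ap; first by exists [::].
exists (rcons (rev q) u); rewrite !last_rcons; split => //.
by have := alt_path_rev ap; rewrite rev_cons rev_rcons.
Qed.

Definition maxm M := max_matching E W M.

Lemma no_aug M u p : maxm M -> u \in Ub true M -> alt_path M (u :: p) ->
  last u p \notin Ub false M.
Proof.
case=> m mx uU ap; apply/negP => lU.
have [M' [m' c']] := augment (leqnn _) m uU ap lU.
by have := mx _ m'; rewrite c' ltnn.
Qed.

Lemma L1 b M x : maxm M -> x \in R b M -> isV x = ~~ b -> [exists y, inM M x y].
Proof.
move=> mM /inR [u [p [uU ap ex]]] xs; subst x; apply: contraT => /existsPn un.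
have lU : last u p \in Ub (~~ b) M.
  rewrite inE xs eqxx (reach_Bp (ex_intro _ u (ex_intro _ p (And3 uU ap erefl)))) /=.
  exact/forallP.
case: b uU lU xs => uU lU xs.
  by move: (no_aug mM uU ap); rewrite lU.
have [p' [ap' e]] := rev_reach ap.
have := no_aug mM lU ap'; rewrite e uU //.
Qed.


Lemma reach_last M b x : x \in R b M -> exists u p,
  [/\ u \in Ub b M, alt_path M (u :: p), x = nth u (u :: p) (size p),
      isV x = b (+) odd (size p) &
      forall i, i < size p -> inM M (nth u (u :: p) i) (nth u (u :: p) i.+1) = odd i].
Proof.
move/inR => [u [p [uU ap ex]]]; exists u, p.
have [pa ps] := parity u uU ap.
have hx : x = nth u (u :: p) (size p) by rewrite -ex (last_nth u).
split => //; by rewrite hx ps.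
Qed.

Lemma L3 b M x y : matching M -> x \in R b M -> isV x = b -> inM M x y -> y \in R b M.
Proof.
move=> m /reach_last [u [p [uU ap hx xs pa]]] xb xy.
case: p ap hx xs pa => [|z p] ap hx xs pa.
  move: uU; rewrite inE => /and3P[_ _ /forallP /(_ y)]; rewrite /= in hx; by rewrite -hx xy.
have oz : odd (size p) by move: xs; rewrite xb /=; case: b {xb uU}; case: (odd _).
have := pa (size p) (ltnSn _); rewrite oz -hx inM_sym => h.
rewrite -(inM_uniq m h xy); apply/inR; apply: (reach_nth _ uU ap); rewrite /=; lia.
Qed.

Lemma L2 b M x y : matching M -> x \in R b M -> isV x = ~~ b -> inM M x y -> y \in R b M.
Proof.
move=> m /reach_last [u [p [uU ap hx xs pa]]] xb xy.
case: p ap hx xs pa => [|z p] ap hx xs pa.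
  by move: xs; rewrite xb /= addbF; case: b {xb uU}.
have oz : ~~ odd (size p) by move: xs; rewrite xb /=; case: b {xb uU}; case: (odd _).
have hx' : x = last z p by rewrite hx /= -(last_nth u).
have e : nth u (u :: z :: p) (size p).+1 = x by rewrite hx.
have hxy := inM_adj m xy.
case yp: (y \in u :: z :: p).
  rewrite -(nth_index u yp); apply/inR; apply: (reach_nth _ uU ap); by rewrite index_mem.
apply/inR; exists u, (rcons (z :: p) y); split => //; last by rewrite last_rcons.
have := @alt_path_rcons M (u :: z :: p) y ap; rewrite rcons_cons; apply.
- by rewrite yp.
- by case/andP: (adjBp_Bp hxy).
- by move=> x0; rewrite /= -hx'.
- move=> x0 _; rewrite /= -hx' (set_nth_default u); last by rewrite /=; lia.
  have := pa (size p) (ltnSn _); rewrite e (negbTE oz) /= => ->.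
  by rewrite xy.
Qed.

Lemma L4 b M x y : matching M -> x \in R b M -> isV x = b -> adjBp x y -> y \in R b M.
Proof.
move=> m xR xb xy.
case xyM: (inM M x y); first exact: L3 m xR xb xyM.
move: xR => /reach_last [u [p [uU ap hx xs pa]]].
case yp: (y \in u :: p).
  rewrite -(nth_index u yp); apply/inR; apply: (reach_nth _ uU ap); by rewrite index_mem.
apply/inR; exists u, (rcons p y); split => //; last by rewrite last_rcons.
have hx' : x = last u p by rewrite hx -(last_nth u).
have := @alt_path_rcons M (u :: p) y ap; rewrite rcons_cons; apply.
- by rewrite yp.
- by case/andP: (adjBp_Bp xy).
- by move=> x0; rewrite /= -hx'.
- move=> x0 /=; case: p ap hx xs pa {yp} hx' => [//|z p] ap hx xs pa hx' _.
  have oz : odd (size p) by move: xs; rewrite xb /=; case: b {xb uU}; case: (odd _).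
  have e : nth u (u :: z :: p) (size p).+1 = x by rewrite hx.
  rewrite /= in hx'; rewrite /= -hx' (set_nth_default u); last by rewrite /=; lia.
  have := pa (size p) (ltnSn _); rewrite e oz => ->.
  by rewrite xyM.
Qed.

Lemma L5 b M x : x \in R b M -> isV x = ~~ b ->
  exists z, [/\ z \in R b M, isV z = b & adjBp z x].
Proof.
move=> /reach_last [u [p [uU ap hx xs pa]]] xb.
case: p ap hx xs pa => [|z p] ap hx xs pa.
  by move: xs; rewrite xb /= addbF; case: b {xb uU}.
exists (nth u (u :: z :: p) (size p)); split.
- apply/inR; apply: (reach_nth _ uU ap); rewrite /=; lia.
- have [_ _ _ adj _] := ap.
  have := adjBp_side (adj (size p) u (ltnSn _)); rewrite -hx xb.
  by case: (isV _); case: b {xb uU xs}.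
- have [_ _ _ adj _] := ap; rewrite hx; exact: adj.
Qed.


Definition A b M : {set vtx} := [set x in R b M | isV x == b].
Local Notation NB X := (adjS E Bp X).

Lemma R_Bp b M x : x \in R b M -> x \in Bp.
Proof. by rewrite inE => /andP[]. Qed.

Lemma notUb_matched b M x : x \in Bp -> isV x = b -> x \notin Ub b M -> [exists y, inM M x y].
Proof.
move=> xB xb; rewrite inE xB xb eqxx /= => /forallPn [y /negPn h].
by apply/existsP; exists y.
Qed.

Lemma mate_inj M x x' : matching M -> [exists y, inM M x y] -> [exists y, inM M x' y] ->
  mate M x = mate M x' -> x = x'.
Proof.
move=> m /mate_inM h /mate_inM h' e.
rewrite e inM_sym in h; rewrite inM_sym in h'.
exact: inM_uniq m h h'.
Qed.

Lemma NB_mem X y : (y \in NB X) = (y \in Bp) && [exists x in X, adjv E x y].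
Proof. by rewrite inE. Qed.

Lemma Ub_unmatched b M x y : x \in Ub b M -> inM M x y = false.
Proof. by rewrite inE => /and3P[_ _ /forallP /(_ y) /negbTE]. Qed.

Lemma L7 b M X : matching M -> X \subset [set x in Bp | isV x == b] ->
  #|X :\: Ub b M| <= #|NB X| /\ #|X| <= #|NB X| + #|Ub b M|.
Proof.
move=> m hX.
have e1 := cardsID (Ub b M) X.
have c1 : #|X :&: Ub b M| <= #|Ub b M| by apply: subset_leq_card; apply: subsetIr.
have mt : forall x, x \in X :\: Ub b M -> [exists y, inM M x y].
  move=> x; rewrite in_setD => /andP[nU xX].
  have := subsetP hX x xX; rewrite inE => /andP[xB /eqP xb].
  exact: notUb_matched xB xb nU.
have c2 : #|mate M @: (X :\: Ub b M)| = #|X :\: Ub b M|.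
  apply: card_in_imset => x x' hx hx'; exact: mate_inj m (mt x hx) (mt x' hx').
have c3 : mate M @: (X :\: Ub b M) \subset NB X.
  apply/subsetP => z /imsetP [x hx ->].
  have h := mate_inM (mt x hx); have a := inM_adj m h.
  rewrite NB_mem; case/andP: (adjBp_Bp a) => _ ->; apply/existsP; exists x.
  move: hx; rewrite in_setD => /andP[_ ->]; by case/and3P: a.
have := subset_leq_card c3; rewrite c2 => c4.
split => //; rewrite -e1 addnC; exact: leq_add.
Qed.

Lemma L8 b M X : matching M -> X \subset [set x in Bp | isV x == b] ->
  #|NB X| + #|Ub b M| <= #|X| -> R b M \subset X :|: NB X.
Proof.
move=> m hX hc.
have e1 := cardsID (Ub b M) X.
have [c0 _] := L7 m hX.
have c1 : #|X :&: Ub b M| <= #|Ub b M| by apply: subset_leq_card; apply: subsetIr.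
have UX : Ub b M \subset X.
  have : X :&: Ub b M = Ub b M.
    apply/eqP; rewrite eqEcard subsetIr /=.
    have h : #|NB X| + #|Ub b M| <= #|NB X| + #|X :&: Ub b M|.
      apply: (leq_trans hc); rewrite -e1 addnC leq_add2r; exact: c0.
    by rewrite leq_add2l in h.
  by move=> <-; apply: subsetIl.
have mt : forall x, x \in X :\: Ub b M -> [exists y, inM M x y].
  move=> x; rewrite in_setD => /andP[nU xX].
  have := subsetP hX x xX; rewrite inE => /andP[xB /eqP xb].
  exact: notUb_matched xB xb nU.
have c2 : #|mate M @: (X :\: Ub b M)| = #|X :\: Ub b M|.
  apply: card_in_imset => x x' hx hx'; exact: mate_inj m (mt x hx) (mt x' hx').
have c3 : mate M @: (X :\: Ub b M) \subset NB X.
  apply/subsetP => z /imsetP [x hx ->].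
  have h := mate_inM (mt x hx); have a := inM_adj m h.
  rewrite NB_mem; case/andP: (adjBp_Bp a) => _ ->; apply/existsP; exists x.
  move: hx; rewrite in_setD => /andP[_ ->]; by case/and3P: a.
have eN : mate M @: (X :\: Ub b M) = NB X.
  apply/eqP; rewrite eqEcard c3 c2 /=.
  have h : #|NB X| + #|Ub b M| <= #|X :\: Ub b M| + #|Ub b M|.
    apply: (leq_trans hc); rewrite -e1 addnC leq_add2l; exact: c1.
  by rewrite leq_add2r in h.
apply/subsetP => x /reach_last [u [p [uU ap hx xs pa]]].
have [_ ps] := parity u uU ap.
have [_ _ _ adj _] := ap.
suff H : forall i, i <= size p -> if isV (nth u (u :: p) i) == b
    then nth u (u :: p) i \in X else nth u (u :: p) i \in NB X.
  have := H (size p) (leqnn _); rewrite -hx; case: ifP => _ h; by rewrite inE h ?orbT.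
elim => [|i IH] hi.
  by rewrite /= (Ub_side uU) eqxx; apply: (subsetP UX).
have a := adj i u hi.
have sy := adjBp_side a.
have := IH (ltnW hi); rewrite sy.
case: ifP => zb hz.
  rewrite (eqP zb) (_ : (~~ b == b) = false); last by case: (b).
  rewrite NB_mem; case/andP: (adjBp_Bp a) => _ ->; apply/existsP; exists (nth u (u :: p) i).
  by rewrite hz; case/and3P: a.
have zb' : ~~ isV (nth u (u :: p) i) == b.
  by move: zb; case: (isV _); case: (b).
rewrite zb'; rewrite -eN in hz; case/imsetP: hz => x' hx' ez.
have oi : odd i.
  have := ps i (leq_trans hi (leqnSn _)); move: zb.
  by case: (isV _); case: (b); case: (odd i).
have hzy : inM M (nth u (u :: p) i) (nth u (u :: p) i.+1) by rewrite pa.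
have h1 := mate_inM (mt x' hx'); rewrite -ez inM_sym in h1.
rewrite -(inM_uniq m h1 hzy).
by move: hx'; rewrite in_setD => /andP[].
Qed.

Lemma RA b M : matching M -> R b M = A b M :|: NB (A b M).
Proof.
move=> m; apply/setP => x; apply/idP/idP.
  move=> xR; rewrite in_setU inE xR /=.
  case: (eqVneq (isV x) b) => //= xb.
  have xb' : isV x = ~~ b by move: xb; case: (isV x); case: (b).
  have [z [zR zb za]] := L5 xR xb'.
  rewrite NB_mem (R_Bp xR) /=; apply/existsP; exists z.
  by rewrite inE zR zb eqxx /=; case/and3P: za.
rewrite in_setU => /orP[|]; first by rewrite inE => /andP[].
rewrite NB_mem => /andP[xB /existsP [z /andP[zA za]]].
move: zA; rewrite inE => /andP[zR /eqP zb].
apply: (L4 m zR zb); by rewrite /adjBp (R_Bp zR) xB za.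
Qed.

Lemma L6 b M : maxm M -> #|A b M| = #|NB (A b M)| + #|Ub b M|.
Proof.
move=> mM; have m := mM.1.
have hU : Ub b M \subset A b M.
  by apply/subsetP => x xU; rewrite inE (Ub_R xU) (Ub_side xU) eqxx.
have e1 := cardsID (Ub b M) (A b M).
rewrite (setIidPr hU) in e1.
have NR : forall y, y \in NB (A b M) -> y \in R b M /\ isV y = ~~ b.
  move=> y; rewrite NB_mem => /andP[yB /existsP [x /andP[xA xa]]].
  move: xA; rewrite inE => /andP[xR /eqP xb].
  split; last by rewrite (adjv_side xa) xb.
  apply: (L4 m xR xb); by rewrite /adjBp (R_Bp xR) yB xa.
have mt : forall y, y \in NB (A b M) -> [exists z, inM M y z].
  by move=> y /NR [yR yb]; apply: L1 mM yR yb.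
have c2 : #|mate M @: NB (A b M)| = #|NB (A b M)|.
  apply: card_in_imset => x x' hx hx'; exact: mate_inj m (mt x hx) (mt x' hx').
have eq : mate M @: NB (A b M) = A b M :\: Ub b M.
  apply/setP => z; apply/imsetP/idP.
    move=> [y hy ->]; have [yR yb] := NR y hy; have h := mate_inM (mt y hy).
    rewrite in_setD [_ \in A b M]inE (L2 m yR yb h) /=.
    have sz : isV (mate M y) = b by rewrite (adjBp_side (inM_adj m h)) yb negbK.
    rewrite sz eqxx andbT; apply/negP => U.
    by rewrite inM_sym (Ub_unmatched _ U) in h.
  rewrite in_setD => /andP[nU zA]; move: zA; rewrite inE => /andP[zR /eqP zb].
  have h := mate_inM (notUb_matched (R_Bp zR) zb nU).
  exists (mate M z); last by rewrite (mateP m (y := z)) // inM_sym.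
  rewrite NB_mem; case/andP: (adjBp_Bp (inM_adj m h)) => _ ->; apply/existsP; exists z.
  rewrite inE zR zb eqxx /=; by case/and3P: (inM_adj m h).
rewrite -eq c2 in e1; rewrite -e1 addnC //.
Qed.

Lemma R_sub b M1 M2 : maxm M1 -> maxm M2 -> R b M2 \subset R b M1.
Proof.
move=> h1 h2.
have hA : forall M, A b M \subset [set x in Bp | isV x == b].
  by move=> M; apply/subsetP => x; rewrite !inE => /andP[/andP[-> _] ->].
have e1 := L6 b h1; have e2 := L6 b h2.
have [_ c] := L7 h1.1 (hA M2).
have c' : #|Ub b M2| <= #|Ub b M1| by move: c; rewrite e2 leq_add2l.
rewrite (RA b h1.1); apply: L8 (h2.1) (hA M1) _.
by rewrite e1 leq_add2l.
Qed.

Lemma R_indep b M1 M2 : maxm M1 -> maxm M2 -> R b M1 = R b M2.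
Proof. by move=> h1 h2; apply/eqP; rewrite eqEsubset !R_sub. Qed.

End Match.

Section Main.
Variables (V F : finType) (E : V -> F -> bool) (W : {set V}).
Local Notation vtx := (vtx V F).
Local Notation Bp := (Bp F W).
Implicit Types (M : {set (V * F)}) (x y : vtx).

Lemma TCE M : TC E W M = Bp :\: (R E W true M :|: R E W false M).
Proof. by rewrite /TC TIE TOE. Qed.

Lemma tc_matched M x : maxm E W M -> x \in TC E W M -> [exists y, inM M x y].
Proof.
move=> mM; rewrite TCE in_setD in_setU negb_or => /andP[/andP[n1 n2] xB].
apply: (notUb_matched (b := isV x) xB erefl); apply/negP => /Ub_R h.
by case: (isV x) h => h; [rewrite h in n1 | rewrite h in n2].
Qed.

Lemma tc_mate M x y : maxm E W M -> x \in TC E W M -> inM M x y -> y \in TC E W M.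
Proof.
move=> mM; have m := mM.1.
rewrite !TCE !in_setD !in_setU !negb_or => /andP[/andP[n1 n2] xB] xy.
have yB : y \in Bp by case/andP: (adjBp_Bp (inM_adj m xy)).
rewrite yB andbT.
have H : forall b, y \in R E W b M -> x \in R E W b M.
  move=> b yR; rewrite inM_sym in xy.
  case: (eqVneq (isV y) b) => yb.
    exact: L3 m yR yb xy.
  apply: L2 m yR _ xy; by move: yb; case: (isV y); case: (b).
by apply/andP; split; apply/negP => /H; [rewrite (negbTE n1) | rewrite (negbTE n2)].
Qed.

Lemma tc_gsc M : maxm E W M -> graph_self_contained E (TC E W M).
Proof.
move=> mM; have m := mM.1; apply/gscE.
set S := TC E W M.
have mt : forall x, x \in S -> [exists y, inM M x y] by move=> x; exact: tc_matched mM.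
have inj : {in S &, injective (mate M)}.
  by move=> x x' hx hx'; apply: mate_inj m (mt x hx) (mt x' hx').
have mS : forall x, x \in S -> mate M x \in S /\ isV (mate M x) = ~~ isV x /\ adjv E x (mate M x).
  move=> x hx; have h := mate_inM (mt x hx); split; first exact: tc_mate mM hx h.
  have a := inM_adj m h; split; first exact: adjBp_side a.
  by case/and3P: a.
clearbody S.
have le : forall b, #|[set x in S | isV x == b]| <= #|[set x in S | isV x == ~~ b]|.
  move=> b; rewrite -(card_in_imset (f := mate M) (D := [set x in S | isV x == b])); last first.
    by move=> x x'; rewrite !inE => /andP[hx _] /andP[hx' _]; apply: inj.
  apply: subset_leq_card; apply/subsetP => z /imsetP [x]; rewrite inE => /andP[hx /eqP xb] ->.
  by have [h1 [h2 _]] := mS x hx; rewrite inE h1 h2 xb eqxx.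
have eF : FS S = [set x in S | isV x == false].
  by apply/setP => x; rewrite !inE isFV; case: (isV x); rewrite ?andbT ?andbF.
have eV : VS S = [set x in S | isV x == true].
  by apply/setP => x; rewrite !inE; case: (isV x); rewrite ?andbT ?andbF.
split.
  apply/eqP; rewrite eqn_leq eF eV; have := le false; have := le true; rewrite /= => -> ->.
  by [].
move=> Y hY.
have YS : Y \subset S by apply/subsetP => x /(subsetP hY); rewrite inE => /andP[].
rewrite -(card_in_imset (f := mate M) (D := Y)); last first.
  by move=> x x' hx hx'; apply: inj; [apply: (subsetP YS x) | apply: (subsetP YS x')].
apply: subset_leq_card; apply/subsetP => z /imsetP [x hx ->].
have := subsetP hY x hx; rewrite inE => /andP[xS _].
have [h1 [_ h3]] := mS x xS.
rewrite inE h1 /=; apply/existsP; exists x; by rewrite hx h3.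
Qed.

End Main.

Unset Implicit Arguments.

Theorem corollary11 (V F : finType) (E : V -> F -> bool) (W : {set V}) :
  [/\ (forall M : {set (V * F)}, max_matching E W M ->
         graph_self_contained E (TC E W M)),
      (exists out : dcg V F, alg3_out E W out)
    & (forall out1 out2 : dcg V F,
         alg3_out E W out1 -> alg3_out E W out2 -> out1 = out2)].
Proof.
have a1E : forall G o, alg1_out E G set0 o <-> alg1_run E G G set0 set0 o.
  by move=> G o; rewrite /alg1_out !imset0 setD0.
split.
- by move=> M mM; apply: tc_gsc.
- pose P := fun M : {set (V * F)} => Defs.decP (matching E W M).
  have P0 : P set0.
    apply/decPP; split; first by move=> p; rewrite inE.
    by move=> p q; rewrite inE.
  have [M0 hM0 mx0] := @arg_maxnP _ set0 P (fun M => #|M|) P0.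
  have mM0 : max_matching E W M0.
    split; first exact/decPP.
    by move=> M' hM'; apply: mx0; apply/decPP.
  have g := (gscE _ _).1 (tc_gsc mM0).
  have [o ho] := run_exists (TC E W M0) (leqnn _) g set0 set0.
  by exists (alg3_build E W M0 o), M0, o; split => //; apply/a1E.
- move=> o1 o2 [M1 [c1 [mx1 /a1E r1 ->]]] [M2 [c2 [mx2 /a1E r2 ->]]].
  have eTI : TI E W M1 = TI E W M2 by rewrite !TIE (R_indep true mx1 mx2).
  have eTO : TO E W M1 = TO E W M2 by rewrite !TOE (R_indep false mx1 mx2).
  have eTC : TC E W M1 = TC E W M2 by rewrite /TC eTI eTO.
  have g := (gscE _ _).1 (tc_gsc mx1).
  rewrite -eTC in r2.
  rewrite (run_unique (leqnn _) g r1 r2).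
  by rewrite /alg3_build eTI eTO eTC.
Qed.
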